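(* Let $G$ be a (weighted) graph that is not a multigraph and is $2$-connected, and let $s, d$ be a source-destination pair. Suppose a forwarding subgraph (FS) uses the shortest path $P(s,d)$ between $s$ and $d$ as the primary path and can avoid any single link failure along the primary path. Then the FS has at least $2|P(s,d)| + 1$ edges, where $|P(s,d)|$ is the number of edges of $P(s,d)$. Moreover, there exist graphs for which this bound is tight.
   Context: A forwarding subgraph (FS) is a directed acyclic subgraph of the network graph specifying the paths a packet may take from source $s$ to destination $d$. It contains a designated primary path from $s$ to $d$. ''Avoiding any single link failure along the primary path'' means that for every node $v_i$ on the primary path, the FS contains an alternate path from $v_i$ to $d$ that does not use $v_i$'s outgoing primary-path link. Throughout, the graph is assumed not to be a multigraph and to be $2$-connected. *)

(* Defs.v *)
From mathcomp Require Import all_boot all_order all_algebra.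
Set Implicit Arguments. Unset Strict Implicit. Unset Printing Implicit Defensive.
Import Order.TTheory GRing.Theory Num.Theory.

Section Defs.
Variable T : finType.

Definition simple_graph (e : rel T) : Prop := symmetric e /\ irreflexive e.

Definition connected_on (e : rel T) (A : {set T}) : Prop :=
  {in A &, forall x y, connect [rel u v | [&& e u v, u \in A & v \in A]] x y}.

Definition two_connected (e : rel T) : Prop :=
  (2 < #|T|)%N /\ connected_on e setT /\ forall v, connected_on e (~: [set v]).

Definition walk (r : rel T) (x y : T) (p : seq T) : bool :=
  path r x p && (last x p == y).

Definition simple_path (r : rel T) (x y : T) (p : seq T) : bool :=
  walk r x y p && uniq (x :: p).

Definition positive_weights (R : numDomainType) (e : rel T) (w : T -> T -> R) : Prop :=
  forall x y, e x y -> (0 < w x y)%R /\ w x y = w y x.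

Definition path_weight (R : numDomainType) (w : T -> T -> R) (x : T) (p : seq T) : R :=
  (\sum_(uv <- zip (x :: p) p) w uv.1 uv.2)%R.

Definition shortest_path (R : numDomainType) (e : rel T) (w : T -> T -> R)
    (s d : T) (p : seq T) : Prop :=
  simple_path e s d p /\
  forall q, walk e s d q -> (path_weight w s p <= path_weight w s q)%R.

Definition arcs (F : {set T * T}) : rel T := fun x y => (x, y) \in F.

Definition acyclic (F : {set T * T}) : Prop :=
  forall x p, path (arcs F) x p -> last x p = x -> p = [::].

Definition forwarding_subgraph (e : rel T) (s d : T) (p : seq T)
    (F : {set T * T}) : Prop :=
  [/\ forall x y, (x, y) \in F -> e x y,
      acyclic F &
      walk (arcs F) s d p].

Definition uses_link (x y : T) (x0 : T) (q : seq T) : bool :=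
  has (fun uv => (uv == (x, y)) || (uv == (y, x))) (zip (x0 :: q) q).

Definition avoids_single_link_failure (s d : T) (p : seq T)
    (F : {set T * T}) : Prop :=
  forall i, (i < size p)%N ->
    let v := nth s (s :: p) i in
    let v' := nth s (s :: p) i.+1 in
    exists q, walk (arcs F) v d q && ~~ uses_link v v' v q.

End Defs.

(* Main.v *)
Require Import Defs.
From mathcomp Require Import all_boot all_order all_algebra.
From mathcomp Require Import zify ring lra.
Set Implicit Arguments. Unset Strict Implicit. Unset Printing Implicit Defensive.
Import Order.TTheory GRing.Theory Num.Theory.

Lemma sub_walk (T : eqType) (r : rel T) s p j m :
  path r s p -> j <= m -> m <= size p ->
  exists c, path r (nth s (s::p) j) c && (last (nth s (s::p) j) c == nth s (s::p) m).
Proof.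
move=> Hp; elim: m => [|m IH] Hjm Hm.
  by move: Hjm; rewrite leqn0 => /eqP ->; exists [::]; rewrite /= eqxx.
case: (ltnP m j) => Hmj.
  have -> : j = m.+1 by apply/eqP; rewrite eqn_leq Hjm Hmj.
  by exists [::]; rewrite /= eqxx.
have [c /andP [Hc /eqP Hl]] := IH Hmj (ltnW Hm).
exists (rcons c (nth s (s :: p) m.+1)).
rewrite rcons_path last_rcons eqxx Hc Hl /= andbT.
exact: (pathP s Hp) m Hm.
Qed.

Lemma no_back (T : eqType) (r : rel T) s p j m :
  (forall x c, path r x c -> last x c = x -> c = [::]) ->
  path r s p -> j <= m -> m <= size p ->
  ~~ r (nth s (s::p) m) (nth s (s::p) j).
Proof.
move=> Hac Hp Hjm Hm; apply/negP => Hr.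
have [c /andP [Hc /eqP Hl]] := sub_walk Hp Hjm Hm.
have := Hac (nth s (s :: p) j) (rcons c (nth s (s :: p) j)).
rewrite rcons_path Hc Hl Hr last_rcons => /(_ isT erefl).
by case: c {Hc Hl}.
Qed.

Lemma part1 (T : finType) (e : rel T) (s d : T) (p : seq T) (F : {set T * T}) :
  simple_graph e -> s != d -> simple_path e s d p ->
  forwarding_subgraph e s d p F ->
  avoids_single_link_failure s d p F ->
  (2 * size p + 1 <= #|F|)%N.
Proof.
move=> _ Hsd /andP [_ Hu] [HFe HFac /andP [HFp /eqP HFl]] Hav.
set k := size p.
pose v i := nth s (s :: p) i.
have vk : v k = d by rewrite /v -HFl -[last s p]/(last s (s::p)) -nth_last.
have vinj : forall i j, i <= k -> j <= k -> v i = v j -> i = j.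
  by move=> i j Hi Hj /eqP; rewrite /v nth_uniq //= ?ltnS // => /eqP.
have k0 : 0 < k.
  rewrite /k lt0n; apply/negP => /eqP/size0nil Hp; by move: Hsd; rewrite -HFl Hp eqxx.
have Hq : forall i, i < k -> exists q, walk (arcs F) (v i) d q && ~~ uses_link (v i) (v i.+1) (v i) q.
  by move=> i Hi; have := Hav i Hi.
have Halt : forall i, i < k -> exists u, ((v i, u) \in F) && (u != v i.+1).
  move=> i Hi; have [[|u q] /andP [/andP [Hw /eqP Hl] Hn]] := Hq i Hi.
    by move: Hl; rewrite /= -vk => /(vinj _ _ (ltnW Hi) (leqnn k)) Hik; rewrite Hik ltnn in Hi.
  exists u; change (arcs F (v i) u && (u != v i.+1)).
  move: Hw Hn; rewrite /= /uses_link /= => /andP [-> _].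
  rewrite negb_or => /andP [Hn _]; apply/eqP => Hu'; by move: Hn; rewrite Hu' eqxx.
have [us [ys /and3P [Hus1 Hus2 Hneq]]] : exists u y, [&& (v k.-1, u) \in F, (u, y) \in F & u != d].
  have Hk1 : k.-1 < k by rewrite prednK.
  have [[|u q] /andP [/andP [Hw /eqP Hl] Hn]] := Hq _ Hk1.
    by move: Hl; rewrite /= -vk => /(vinj _ _ (ltnW Hk1) (leqnn k)) Hik; rewrite Hik ltnn in Hk1.
  have Hud : u != d.
    move: Hn; rewrite /uses_link /= prednK // vk negb_or => /andP [Hn _].
    by apply/eqP => Hu'; move: Hn; rewrite Hu' eqxx.
  case: q Hw Hl Hn => [|y q]; first by rewrite /= => _ Hl; rewrite Hl eqxx in Hud.
  by move=> /= /and3P [H1 H2 _] _ _; exists u, y; rewrite -[(v k.-1, u) \in F]/(arcs F (v k.-1) u) -[(u, y) \in F]/(arcs F u y) H1 H2.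
have usv : forall i, i < k -> us != v i.
  move=> i Hi; apply/eqP => Hus.
  have Hik : i <= k.-1 by rewrite -ltnS prednK.
  have := no_back HFac HFp Hik (leq_pred k).
  by rewrite /arcs -/(v i) -/(v k.-1) -Hus Hus1.
pose alt (i : 'I_k) := xchoose (Halt i (ltn_ord i)).
have altP : forall i : 'I_k, ((v i, alt i) \in F) && (alt i != v i.+1).
  by move=> i; exact: (xchooseP (Halt i (ltn_ord i))).
pose g (x : ('I_k + 'I_k) + unit) : T * T :=
  match x with
  | inl (inl i) => (v i, v i.+1)
  | inl (inr i) => (v i, alt i)
  | inr _ => (us, ys)
  end.
have ginj : injective g.
  have vI : forall i j : 'I_k, v i = v j -> i = j.
    by move=> i j /vinj H; apply/val_inj/H; apply: ltnW.
  case=> [[i|i]|[]] [[j|j]|[]] /=.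
  - by case=> /vI ->.
  - by case=> /vI -> H; have := altP j; rewrite -H eqxx andbF.
  - by case=> H _; have := usv _ (ltn_ord i); rewrite -H eqxx.
  - by case=> /vI -> H; have := altP j; rewrite H eqxx andbF.
  - by case=> /vI ->.
  - by case=> H _; have := usv _ (ltn_ord i); rewrite -H eqxx.
  - by case=> H _; have := usv _ (ltn_ord j); rewrite H eqxx.
  - by case=> H _; have := usv _ (ltn_ord j); rewrite H eqxx.
  - by [].
have sub : [set g x | x in [set: ('I_k + 'I_k) + unit]] \subset F.
  apply/subsetP => a /imsetP [[[i|i]|[]] _ ->] /=.
  - exact: (pathP s HFp) i (ltn_ord i).
  - by case/andP: (altP i).
  - exact: Hus2.
have := subset_leq_card sub; rewrite card_imset // cardsT !card_sum card_ord card_unit.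
by rewrite mul2n addnn.
Qed.

Section Ex.
Variable k : nat.
Local Notation VT := ('I_k.+1 + bool)%type.

Definition ev : rel VT := fun x y =>
  match x, y with
  | inl i, inl j => (i.+1 == j :> nat) || (j.+1 == i :> nat)
  | inr a, inr b => a != b
  | _, _ => true
  end.

Definition wv (R : numDomainType) (x y : VT) : R :=
  match x, y with inl _, inl _ => 1%R | _, _ => (k%:R)%R end.

Definition phi (R : numDomainType) (x : VT) : R :=
  match x with inl i => ((i : nat)%:R)%R | inr _ => 0%R end.

Definition vv (i : nat) : VT := inl (inord i).

Definition gv (x : ('I_k + 'I_k) + unit) : VT * VT :=
  match x with
  | inl (inl i) => (vv i, vv i.+1)
  | inl (inr i) => (vv i, inr false)
  | inr _ => (inr false, vv k)
  end.

Definition Fv : {set VT * VT} := [set gv x | x in [set: ('I_k + 'I_k) + unit]].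

Definition rk (x : VT) : nat := match x with inl i => 2 * i | inr _ => (2 * k).-1 end.

Lemma vv_inj i j : i <= k -> j <= k -> vv i = vv j -> i = j.
Proof.
move=> Hi Hj [] /(congr1 val) /=; rewrite !inordK //.
Qed.

Lemma vvK i : i <= k -> nat_of_ord (match vv i with inl a => a | inr _ => ord0 end) = i.
Proof. by move=> Hi; rewrite /vv inordK. Qed.

Lemma ev_sym : symmetric ev.
Proof. case=> [i|a] [j|b]; rewrite /ev //; [exact: orbC | by rewrite eq_sym]. Qed.

Lemma ev_irr : irreflexive ev.
Proof. case=> [i|a]; rewrite /ev; last by rewrite eqxx.
by rewrite orbb; apply/negbTE; rewrite neq_ltn ltnSn orbT.
Qed.

Lemma ev_step i : i < k -> ev (vv i) (vv i.+1).
Proof.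
move=> Hi; rewrite /ev /vv (inordK (_ : i < k.+1)) ?(inordK (_ : i.+1 < k.+1)) ?eqxx //.
by apply: ltnW.
Qed.

Lemma hub z b : z != inr b -> ev z (inr b) && ev (inr b) z.
Proof.
case: z => [i|c] //= H; rewrite eq_sym andbb; apply/negP => /eqP E.
by move: H; rewrite E eqxx.
Qed.

Lemma rk_arcs x y : 0 < k -> arcs Fv x y -> rk x < rk y.
Proof.
move=> k0; rewrite /arcs => /imsetP [[[i|i]|[]] _ [-> ->]]; rewrite /rk /vv.
- have H1 : i < k.+1 := leqW (ltn_ord i).
  have H2 : i.+1 < k.+1 by rewrite ltnS.
  rewrite (inordK H1) (inordK H2).
  by rewrite ltn_pmul2l.
- have H1 : i < k.+1 := leqW (ltn_ord i).
  rewrite (inordK H1).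
  have := ltn_ord i; lia.
- rewrite (inordK (ltnSn k)). lia.
Qed.

Lemma rk_path x c : 0 < k -> path (arcs Fv) x c -> c != [::] -> rk x < rk (last x c).
Proof.
move=> k0; elim: c x => [|y c IH] x //= /andP [Hxy Hp] _.
have Hr := rk_arcs k0 Hxy.
case: c IH Hp => [|z c] IH Hp //=.
by apply: ltn_trans Hr _; apply: IH.
Qed.

Lemma Fv_acyclic : 0 < k -> acyclic Fv.
Proof.
move=> k0 x c Hp Hl; apply/eqP; apply/negP => /negP Hc.
by have := rk_path k0 Hp Hc; rewrite Hl ltnn.
Qed.


Lemma pw_cons (R : realFieldType) (T : finType) (w : T -> T -> R) x y q :
  path_weight w x (y :: q) = (w x y + path_weight w y q)%R.
Proof. by rewrite /path_weight /= big_cons. Qed.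

Lemma pw_nil (R : realFieldType) (T : finType) (w : T -> T -> R) x :
  path_weight w x [::] = 0%R.
Proof. by rewrite /path_weight /= big_nil. Qed.

Lemma phi_step (R : realFieldType) x y : ev x y -> (phi R y - phi R x <= wv R x y)%R.
Proof.
case: x => [i|a]; case: y => [j|b]; rewrite /ev /phi /wv.
- case/orP => /eqP H.
    by rewrite -H -natr1 addrAC subrr add0r.
  have Hji : (j <= i)%N by rewrite -H.
  apply: (le_trans _ ler01); rewrite subr_le0 ler_nat //.
- move=> _; rewrite sub0r (le_trans _ (ler0n _ k)) // oppr_le0 ler0n //.
- move=> _; rewrite subr0 ler_nat -ltnS //.
- by move=> _; rewrite subrr ler0n.
Qed.

Lemma pw_lb (R : realFieldType) x q :
  path ev x q -> (phi R (last x q) - phi R x <= path_weight (wv R) x q)%R.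
Proof.
elim: q x => [|y q IH] x /=; first by rewrite pw_nil subrr.
case/andP => Hxy Hp; rewrite pw_cons.
have H1 := phi_step R Hxy; have H2 := IH y Hp.
have -> : (phi R (last y q) - phi R x = (phi R y - phi R x) + (phi R (last y q) - phi R y))%R by ring.
exact: lerD.
Qed.

Lemma pw_path (R : realFieldType) m n :
  path_weight (wv R) (vv m) (map vv (iota m.+1 n)) = (n%:R)%R.
Proof.
elim: n m => [|n IH] m; first by rewrite pw_nil.
rewrite [iota _ _]/= [map _ _]/= pw_cons IH.
by rewrite /wv /vv -[n.+1]add1n natrD.
Qed.

Lemma path_vv (r : rel VT) : (forall i, i < k -> r (vv i) (vv i.+1)) ->
  forall n m, m + n <= k -> path r (vv m) (map vv (iota m.+1 n)).
Proof.
move=> Hr; elim=> [|n IH] m Hmn //.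
rewrite [iota _ _]/= [map _ _]/= [path _ _ _]/=.
rewrite Hr ?IH //; lia.
Qed.

Lemma last_iota_ m n : last m (iota m.+1 n) = m + n.
Proof. elim: n m => [|n IH] m /=; first by rewrite addn0. by rewrite IH addnS. Qed.

Lemma nth_vv i : i <= k -> nth (vv 0) (map vv (iota 0 k.+1)) i = vv i.
Proof. by move=> Hi; rewrite (nth_map 0) ?size_iota // nth_iota. Qed.

Lemma gv_inj : 0 < k -> injective gv.
Proof.
move=> k0.
have vI : forall i j : 'I_k, vv i = vv j -> i = j.
  by move=> i j /vv_inj H; apply/val_inj/H; apply: ltnW.
case=> [[i|i]|[]] [[j|j]|[]]; rewrite /gv.
- by move=> E; have := congr1 fst E => /= /vI ->.
- by case=> _; rewrite /vv.
- by case; rewrite /vv.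
- by case=> _; rewrite /vv.
- by move=> E; have := congr1 fst E => /= /vI ->.
- by case; rewrite /vv.
- by case; rewrite /vv.
- by case; rewrite /vv.
- by [].
Qed.

Lemma card_Fv : 0 < k -> #|Fv| = (2 * k + 1)%N.
Proof.
move=> k0; rewrite /Fv card_imset; last exact: gv_inj.
by rewrite cardsT !card_sum card_ord card_unit mul2n addnn.
Qed.

Lemma hub_conn (A : {set VT}) h : h \in A ->
  (forall z, z \in A -> z != h -> ev z h && ev h z) -> connected_on ev A.
Proof.
move=> hA Hz x y xA yA.
apply: (connect_trans (y := h)).
  case: (eqVneq x h) => [->|xh]; first exact: connect0.
  apply: connect1 => /=; apply/and3P; split => //; by case/andP: (Hz x xA xh).
case: (eqVneq y h) => [->|yh]; first exact: connect0.
apply: connect1 => /=; apply/and3P; split => //; by case/andP: (Hz y yA yh).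
Qed.

End Ex.

Theorem theorem1 (R : realFieldType) :
  (forall (T : finType) (e : rel T) (w : T -> T -> R) (s d : T) (p : seq T)
          (F : {set T * T}),
      simple_graph e -> positive_weights e w -> two_connected e ->
      s != d ->
      shortest_path e w s d p ->
      forwarding_subgraph e s d p F ->
      avoids_single_link_failure s d p F ->
      (2 * size p + 1 <= #|F|)%N)
  /\
  (forall k : nat, (0 < k)%N ->
     exists (T : finType) (e : rel T) (w : T -> T -> R) (s d : T) (p : seq T)
            (F : {set T * T}),
       simple_graph e /\ positive_weights e w /\ two_connected e /\ s != d /\
       shortest_path e w s d p /\
       forwarding_subgraph e s d p F /\
       avoids_single_link_failure s d p F /\
       size p = k /\
       #|F| = (2 * size p + 1)%N).
Proof.
split.
  move=> T e w s d p F Hg _ _ Hsd [Hsp _] HF Hav.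
  exact: part1 Hg Hsd Hsp HF Hav.
move=> k k0.
exists ('I_k.+1 + bool)%type, (@ev k), (@wv k R), (@vv k 0), (@vv k k),
  (map (@vv k) (iota 1 k)), (@Fv k).
have Hlast : last (@vv k 0) (map (@vv k) (iota 1 k)) = @vv k k.
  by rewrite last_map last_iota_ add0n.
have Hpath : path (@ev k) (@vv k 0) (map (@vv k) (iota 1 k)).
  by apply: (path_vv (@ev_step k)); rewrite add0n.
have HrF : forall i, i < k -> arcs (@Fv k) (@vv k i) (@vv k i.+1).
  by move=> i Hi; apply/imsetP; exists (inl (inl (Ordinal Hi))).
have HpF : path (arcs (@Fv k)) (@vv k 0) (map (@vv k) (iota 1 k)).
  by apply: (path_vv HrF); rewrite add0n.
have Hvk : vv k 0 != @vv k k.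
  apply/negP => /eqP /vv_inj H.
  by have := H (leq0n _) (leqnn _); move=> Hk; rewrite -Hk in k0.
have Huniq : uniq (@vv k 0 :: map (@vv k) (iota 1 k)).
  change (uniq (map (@vv k) (iota 0 k.+1))).
  rewrite map_inj_in_uniq ?iota_uniq // => i j; rewrite !mem_iota !add0n => /andP [_ Hi] /andP [_ Hj].
  by apply: vv_inj; rewrite -ltnS.
split; first by split; [exact: ev_sym | exact: ev_irr].
split.
  move=> x y _; case: x => [i|a]; case: y => [j|b]; rewrite /wv; split => //;
    by rewrite ?ltr01 ?ltr0n.
split.
  split; first by rewrite card_sum card_ord card_bool addn2.
  split.
    apply: (hub_conn (h := inr false)); first by rewrite in_setT.
    by move=> z _ /hub.
  move=> v; apply: (hub_conn (h := inr (v == inr false))).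
    rewrite in_setC in_set1; case: v => [i|c] //.
    by case: c.
  by move=> z _ /hub.
split; first exact: Hvk.
split.
  split; first by rewrite /simple_path /walk Hpath Hlast eqxx Huniq.
  move=> q /andP [Hq /eqP Hl].
  rewrite (@pw_path k R 0 k).
  have := pw_lb R Hq; rewrite Hl /phi /vv (inordK (ltnSn k)) (inordK (ltn0Sn k)) subr0.
  by [].
split.
  split.
  - move=> x y /imsetP [[[i|i]|[]] _ [-> ->]].
    + exact: ev_step.
    + by rewrite /vv /ev.
    + by rewrite /vv /ev.
  - exact: Fv_acyclic.
  - by rewrite /walk HpF Hlast eqxx.
split.
  move=> i; rewrite size_map size_iota => Hi.
  cbv zeta.
  rewrite -[@vv k 0 :: _]/(map (@vv k) (iota 0 k.+1)).
  rewrite (nth_vv (ltnW Hi)) (nth_vv Hi).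
  exists [:: inr false; @vv k k].
  have A1 : arcs (@Fv k) (@vv k i) (inr false).
    by apply/imsetP; exists (inl (inr (Ordinal Hi))).
  have A2 : arcs (@Fv k) (inr false) (@vv k k).
    by apply/imsetP; exists (inr tt).
  rewrite /walk /uses_link /= A1 A2 eqxx /=.
  by rewrite !xpair_eqE /vv /= !andbF.
split; first by rewrite size_map size_iota.
by rewrite size_map size_iota card_Fv.
Qed.
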